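(* Let $G=(V,E)$ be a graph, $k\ge1$ an integer, and let $G_k$ be obtained from $G$ by performing a $k$-comb operation at every vertex of $G$. Let $p(k,u,x)=(1+x)^k(xu^2+1)-xu^2$. Then $$P(G_k;u,x)=p(k,u,x)^{|V|}\,P\big(G;u,\,x/p(k,u,x)\big)$$ (as an identity of rational functions; the right-hand side is a polynomial).
   Context: Graphs are finite, undirected, without multiple edges, self loops allowed; $G[A]$ is the induced subgraph on $A$, and $rk(G)$ is the $\mathbb{F}_2$-rank of the adjacency matrix ($m_{ij}=1$ iff $\{i,j\}\in E$, diagonal entry $1$ iff self loop; empty graph rank $0$). $P(G;u,x)=\sum_{A\subseteq V}x^{|A|}u^{rk(G[A])}$, with $0^0=1$. The $k$-comb of $G$ at a vertex $a$ is the graph $(V\cup\{a_1,\dots,a_k\},\,E\cup\{\{a,a_1\},\dots,\{a,a_k\}\})$ with $a_1,\dots,a_k$ new vertices (no self loops). $G_k$ is obtained by adding such a $k$-comb (with fresh new vertices) at each original vertex $a\in V$. *)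

(* Defs.v *)
From HB Require Import structures.
From mathcomp Require Import all_boot all_order all_algebra.
Set Implicit Arguments. Unset Strict Implicit. Unset Printing Implicit Defensive.
Import GRing.Theory.
Local Open Scope ring_scope.

(* A graph is a finite vertex type V with a symmetric edge relation e : rel V;
   e x x = true encodes a self loop at x. *)

Definition adjmx (V : finType) (e : rel V) : 'M['F_2]_#|V| :=
  \matrix_(i, j) ((e (enum_val i) (enum_val j) : nat)%:R).

Definition rk (V : finType) (e : rel V) : nat := \rank (adjmx e).

Definition induced (V : finType) (e : rel V) (A : {set V}) :
  rel {v : V | v \in A} := fun a b => e (val a) (val b).

Definition Ppoly (R : comNzRingType) (V : finType) (e : rel V) (u t : R) : R :=
  \sum_(A : {set V}) t ^+ #|A| * u ^+ rk (@induced V e A).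

(* G_k: at every vertex a add k new pendant vertices (a,i), i < k,
   each joined to a only (no self loops). *)
Definition comb_all (V : finType) (e : rel V) (k : nat) :
  rel (V + (V * 'I_k))%type :=
  fun a b => match a, b with
  | inl x, inl y => e x y
  | inl x, inr (y, _) => x == y
  | inr (x, _), inl y => x == y
  | inr _, inr _ => false
  end.

Definition pk (R : comNzRingType) (k : nat) (u x : R) : R :=
  (1 + x) ^+ k * (x * u ^+ 2 + 1) - x * u ^+ 2.

(* Main.v *)
Require Import Defs.
From HB Require Import structures.
From mathcomp Require Import all_boot all_order all_algebra.
Set Implicit Arguments. Unset Strict Implicit. Unset Printing Implicit Defensive.
Import GRing.Theory.
Local Open Scope ring_scope.

Definition mxR (T : finType) (r : rel T) n (phi : 'I_n -> T) : 'M['F_2]_n :=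
  \matrix_(i, j) ((r (phi i) (phi j) : nat)%:R).
Definition RkF (T : finType) (r : rel T) n (phi : 'I_n -> T) := \rank (mxR r phi).

Lemma rank_mxsub m n (f g : 'I_m -> 'I_n) (A : 'M['F_2]_n) :
  (\rank (mxsub f g A) <= \rank A)%N.
Proof.
have -> : mxsub f g A = rowsub f 1%:M *m (A *m colsub g 1%:M).
  by rewrite mulmx_colsub mulmx1 -rowsubE; apply/matrixP=> i j; rewrite !mxE.
apply: leq_trans (mxrankM_maxr _ _) _; exact: mxrankM_maxl.
Qed.

Lemma RkF_le (T T' : finType) (r : rel T) (r' : rel T') (h : T -> T') m n
   (phi : 'I_m -> T) (psi : 'I_n -> T') :
  (forall i j, r' (h (phi i)) (h (phi j)) = r (phi i) (phi j)) ->
  (forall i, exists j, h (phi i) = psi j) -> (RkF r phi <= RkF r' psi)%N.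
Proof.
rewrite /RkF; move=> hr him.
have him' i : exists j, h (phi i) == psi j by have [j ->] := him i; exists j.
pose f i := xchoose (him' i).
have -> : mxR r phi = mxsub f f (mxR r' psi).
  by apply/matrixP=> i j; rewrite !mxE -!(eqP (xchooseP (him' _))) hr.
exact: rank_mxsub.
Qed.

Lemma RkF_eq (T : finType) (r : rel T) m n
   (phi : 'I_m -> T) (psi : 'I_n -> T) :
  (forall i, exists j, phi i = psi j) -> (forall j, exists i, psi j = phi i) ->
  RkF r phi = RkF r psi.
Proof.
move=> h1 h2; apply/eqP; rewrite eqn_leq.
by rewrite (@RkF_le _ _ r r id) // (@RkF_le _ _ r r id).
Qed.

Definition rkS (T : finType) (r : rel T) (S : {set T}) :=
  RkF r (fun i : 'I_#|S| => enum_val i).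

Lemma rk_induced (T : finType) (r : rel T) (S : {set T}) :
  rk (@induced _ r S) = rkS r S.
Proof.
have -> : rk (@induced _ r S) =
   RkF r (fun i : 'I_#|{: {v : T | v \in S}}| => val (enum_val i)) by [].
apply: RkF_eq.
  move=> i; have Hi : val (enum_val i) \in S := valP (enum_val i).
  by exists (enum_rank_in Hi (val (enum_val i))); rewrite enum_rankK_in.
move=> j; have Hj : (enum_val j : T) \in S := enum_valP j.
by exists (enum_rank (Sub (enum_val j) Hj : {v : T | v \in S})); rewrite enum_rankK.
Qed.

Definition catf (T : Type) m n (al : 'I_m -> T) (ps : 'I_n -> T) : 'I_(m + n) -> T :=
  fun i => match split i with inl j => al j | inr j => ps j end.
Definition crs (T : finType) (r : rel T) m n (al : 'I_m -> T) (ps : 'I_n -> T)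
  : 'M['F_2]_(m, n) := \matrix_(i, j) ((r (al i) (ps j) : nat)%:R).

Lemma split_lshift m n (i : 'I_m) : split (lshift n i) = inl i.
Proof. exact: (unsplitK (inl i)). Qed.
Lemma split_rshift m n (i : 'I_n) : split (rshift m i) = inr i.
Proof. exact: (unsplitK (inr i)). Qed.

Lemma mxR_cat (T : finType) (r : rel T) m n (al : 'I_m -> T) (ps : 'I_n -> T) :
  mxR r (catf al ps) = block_mx (mxR r al) (crs r al ps) (crs r ps al) (mxR r ps).
Proof.
rewrite -[mxR r _]submxK; congr block_mx; apply/matrixP=> i j;
  by rewrite !mxE /catf ?split_lshift ?split_rshift.
Qed.

Notation o0 := (@ord0 1).
Notation o1 := (@lift 2 (@ord0 1) (@ord0 0)).
Lemma ord2 (i : 'I_2) : i = o0 \/ i = o1.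
Proof. by case: i => [[|[|i]] Hi] //; [left|right]; apply: val_inj. Qed.

Lemma rank_unit_left m n (E : 'M['F_2]_m) (M : 'M['F_2]_(m, n)) :
  E \in unitmx -> \rank (E *m M) = \rank M.
Proof.
move=> hE; rewrite -mxrank_tr trmx_mul mxrankMfree ?mxrank_tr //.
by rewrite row_free_unit unitmx_tr.
Qed.

Lemma rank_pendant (T : finType) (r : rel T) n (al : 'I_2 -> T) (ps : 'I_n -> T) :
  symmetric r -> (forall y, r (al o1) y = (y == al o0)) -> al o1 != al o0 ->
  (forall j, ps j != al o0) ->
  RkF r (catf al ps) = (RkF r ps).+2.
Proof.
move=> rsym hp hne hps; rewrite /RkF mxR_cat.
set A := mxR r al; set Bm := crs r al ps; set Cm := crs r ps al; set D := mxR r ps.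
pose X : 'M['F_2]_(n, 2) := \matrix_(i, j) if val j == 1%N then Cm i o0 else 0.
pose E := block_mx 1%:M 0 X 1%:M.
have hA1 j : A o1 j = (j == o0)%:R.
  by rewrite mxE hp; case: (ord2 j) => ->; rewrite ?eqxx // (negbTE hne).
have hC1 i : Cm i o1 = 0 by rewrite mxE rsym hp (negbTE (hps i)).
have hXA : X *m A = Cm.
  apply/matrixP=> i j; rewrite !mxE !big_ord_recl big_ord0 !mxE /= addr0 mul0r add0r.
  rewrite hp.
  case: (ord2 j) => ->; first by rewrite eqxx mulr1.
  by rewrite (negbTE hne) mulr0 rsym hp (negbTE (hps i)).
have hAt : A^T = A by apply/matrixP=> i j; rewrite !mxE rsym.
have hBC : Cm^T = Bm by apply/matrixP=> i j; rewrite !mxE rsym.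
have hAX : A *m X^T = Bm by rewrite -hAt -trmx_mul hXA hBC.
have hXAX : X *m A *m X^T = 0.
  rewrite hXA; apply/matrixP=> i j; rewrite !mxE !big_ord_recl big_ord0 !mxE /=.
  by rewrite mulr0 add0r addr0 rsym hp (negbTE (hps i)) mul0r.
have -> : block_mx A Bm Cm D = E *m block_mx A 0 0 D *m E^T.
  rewrite /E tr_block_mx !mulmx_block !trmx1 !trmx0.
  rewrite !mul1mx !mul0mx !mulmx0 !mulmx1 !addr0 !add0r.
  by rewrite hXAX hAX hXA add0r.
have hE : E \in unitmx by rewrite unitmxE /E det_lblock !det1 mulr1 unitr1.
rewrite -mulmxA rank_unit_left // mxrankMfree; last by rewrite row_free_unit unitmx_tr.
rewrite rank_diag_block_mx mxrank_unit //.
pose A' : 'M['F_2]_2 := \matrix_(i, j) if (val i == 0%N) && (val j == 0%N) then 0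
   else if (val i == 1%N) && (val j == 1%N) then - A o0 o0 else 1.
have hAA : A *m A' = 1%:M.
  apply/matrixP=> i j; rewrite !mxE !big_ord_recl big_ord0 !mxE /= addr0.
  have h10 : r (al o1) (al o0) = true by rewrite hp eqxx.
  have h11 : r (al o1) (al o1) = false by rewrite hp (negbTE hne).
  have h01 : r (al o0) (al o1) = true by rewrite rsym h10.
  by case: (ord2 i) => ->; case: (ord2 j) => -> /=; rewrite ?h10 ?h11 ?h01 /=;
    rewrite ?mulr0 ?mulr1 ?mul1r ?mul0r ?addr0 ?add0r ?subrr.
by case: (mulmx1_unit hAA).
Qed.

Lemma rank_isolated (T : finType) (r : rel T) m n (al : 'I_m -> T) (ps : 'I_n -> T) :
  symmetric r -> (forall i j, r (al i) (al j) = false) ->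
  (forall i j, r (al i) (ps j) = false) ->
  RkF r (catf al ps) = RkF r ps.
Proof.
move=> rsym h1 h2; rewrite /RkF mxR_cat.
have -> : mxR r al = 0 by apply/matrixP=> i j; rewrite !mxE h1.
have -> : crs r al ps = 0 by apply/matrixP=> i j; rewrite !mxE h2.
have -> : crs r ps al = 0 by apply/matrixP=> i j; rewrite !mxE rsym h2.
by rewrite rank_diag_block_mx mxrank0.
Qed.

Definition ev (T : finType) (S : {set T}) : 'I_#|S| -> T := fun i => enum_val i.
Arguments ev {T} S.

Lemma rkS_ev (T : finType) (r : rel T) (S : {set T}) : rkS r S = RkF r (ev S).
Proof. by []. Qed.

Lemma rkS_split (T : finType) (r : rel T) (S S' : {set T}) m (al : 'I_m -> T) :
  (forall i, al i \in S) -> S' \subset S ->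
  (forall y, y \in S -> y \notin S' -> exists i, y = al i) ->
  rkS r S = RkF r (catf al (ev S')).
Proof.
move=> hal hsub hcov; rewrite rkS_ev; apply: RkF_eq.
  move=> i; have Hi : ev S i \in S := enum_valP i.
  case: (boolP (ev S i \in S')) => Hi'.
    exists (rshift m (enum_rank_in Hi' (ev S i))).
    by rewrite /catf split_rshift /ev enum_rankK_in.
  have [j ->] := hcov _ Hi Hi'.
  by exists (lshift _ j); rewrite /catf split_lshift.
move=> j; rewrite /catf; case: (split j) => l.
  by exists (enum_rank_in (hal l) (al l)); rewrite /ev enum_rankK_in.
have Hl : ev S' l \in S := subsetP hsub _ (enum_valP l).
by exists (enum_rank_in Hl (ev S' l)); rewrite /ev enum_rankK_in.
Qed.

Lemma I_set (T : finType) (r : rel T) (S Z : {set T}) :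
  symmetric r -> Z \subset S ->
  (forall z y, z \in Z -> y \in S -> r z y = false) ->
  rkS r S = rkS r (S :\: Z).
Proof.
move=> rsym hZ hiso.
rewrite (@rkS_split _ r S (S :\: Z) _ (ev Z)).
- rewrite rank_isolated // => i j.
    by apply: hiso; [exact: enum_valP | apply: (subsetP hZ); exact: enum_valP].
  apply: hiso; first exact: enum_valP.
  by have := enum_valP j; rewrite inE => /andP[].
- by move=> i; apply: (subsetP hZ); exact: enum_valP.
- exact: subsetDl.
move=> y hy; rewrite inE hy andbT negbK => hyZ.
by exists (enum_rank_in hyZ y); rewrite /ev enum_rankK_in.
Qed.

Lemma P_set (T : finType) (r : rel T) (S : {set T}) (a p : T) :
  symmetric r -> a \in S -> p \in S -> p != a ->
  (forall y, r p y = (y == a)) ->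
  rkS r S = (rkS r (S :\: [set a; p])).+2.
Proof.
move=> rsym ha hp hne hpy.
pose al : 'I_2 -> T := fun i => if val i == 0%N then a else p.
rewrite (@rkS_split _ r S (S :\: [set a; p]) _ al).
- rewrite rank_pendant //= => j.
  by have := enum_valP j; rewrite !inE negb_or => /andP[/andP[]].
- by move=> i; rewrite /al; case: ifP.
- exact: subsetDl.
move=> y hy; rewrite inE hy andbT negbK !inE => /orP[] /eqP ->.
  by exists o0.
by exists o1.
Qed.

Lemma key_rank (T : finType) (r : rel T) (Q : {set T}) (pi : T -> T) :
  symmetric r -> (forall q y, q \in Q -> r q y = (y == pi q)) ->
  forall n (S D : {set T}), #|D| = n -> D \subset S -> [disjoint D & Q] ->
  (forall q, q \in S -> q \in Q -> pi q \in S -> pi q \in D) ->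
  (forall d, d \in D -> exists q, [/\ q \in S, q \in Q & pi q = d]) ->
  rkS r S = (rkS r (S :\: (D :|: Q)) + 2 * n)%N.
Proof.
move=> rsym hQ; elim=> [|n IH] S D hD hDS hdis hpi hwit.
  move/eqP: hD; rewrite cards_eq0 => /eqP hD; subst D.
  rewrite muln0 addn0 (@I_set _ r S (S :&: Q)) //; last 2 first.
  - exact: subsetIl.
  - move=> z y; rewrite inE => /andP[hzS hzQ] hy; rewrite hQ //.
    apply/negP=> /eqP hyz; subst y; have := hpi _ hzS hzQ hy; by rewrite inE.
  congr rkS; apply/setP=> y; rewrite !inE; by case: (y \in S); case: (y \in Q).
have /set0Pn [d hd] : D != set0 by rewrite -card_gt0 hD.
have [q0 [hq0S hq0Q hq0d]] := hwit d hd.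
have hq0ne : q0 != d.
  by apply/negP=> /eqP hq; subst q0; move: hq0Q; rewrite (disjointFr hdis hd).
rewrite (@P_set _ r S d q0) //; last first.
  - by move=> y; rewrite hQ // hq0d.
  - exact: (subsetP hDS).
have hnotQ : forall y, y \in D -> y \notin Q.
  by move=> y hy; rewrite (disjointFr hdis hy).
rewrite (IH _ (D :\ d)); first last.
- move=> d' hd'; move: hd'; rewrite !inE => /andP[hd'd hd'D].
  have [q [hqS hqQ hqd]] := hwit d' hd'D.
  exists q; split=> //; rewrite !inE hqS andbT negb_or; apply/andP; split.
    by apply/negP=> /eqP hq; subst q; move: (hnotQ _ hd); rewrite hqQ.
  by apply/negP=> /eqP hq; subst q; move: hd'd; rewrite -hqd hq0d eqxx.
- move=> q; rewrite !inE negb_or => /andP[/andP[hqd hqq0] hqS] hqQ.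
  move=> /andP[hpiq hpiS]; rewrite negb_or in hpiq; case/andP: hpiq => hpid _.
  by rewrite hpid (hpi q).
- exact: disjointWl (subsetDl D [set d]) hdis.
- apply/subsetP=> y; rewrite !inE => /andP[hyd hyD].
  rewrite negb_or hyd (subsetP hDS) // andbT /=.
  apply/negP=> /eqP hy; subst y; by move: (hnotQ _ hyD); rewrite hq0Q.
- by rewrite (cardsD1 d) hd in hD; case: hD.
rewrite mulnS addnCA; congr (_ .+2).
congr (rkS r _ + _)%N; apply/setP=> y; rewrite !inE.
case: (y =P d) => [->|hyd]; first by rewrite hd /= !andbF.
case: (y =P q0) => [->|hyq0] /=; first by rewrite hq0Q /= !andbF orbT.
by [].
Qed.

Section Comb.
Variables (V : finType) (e : rel V) (k : nat).
Hypothesis he : symmetric e.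
Local Notation T := (V + V * 'I_k)%type.
Local Notation r := (@comb_all V e k).

Lemma comb_sym : symmetric r.
Proof.
by case=> [a|[a i]] [b|[b j]] //=; rewrite ?he // eq_sym.
Qed.

Definition Qs : {set T} := [set v : T | if v is inr _ then true else false].
Definition piT (v : T) : T := match v with inl a => inl a | inr (a, _) => inl a end.

Lemma comb_pend q y : q \in Qs -> r q y = (y == piT q).
Proof.
rewrite inE; case: q => [//|[a i]] _; case: y => [b|[b j]] //=.
by rewrite eq_sym.
Qed.

Definition Cf := {ffun V -> bool * {ffun 'I_k -> bool}}.
Definition Bset (f : Cf) : {set T} :=
  [set v : T | match v with inl a => (f a).1 | inr (a, i) => (f a).2 i end].
Definition DV (f : Cf) : {set V} := [set a | (f a).1 && [exists i, (f a).2 i]].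
Definition CV (f : Cf) : {set V} := [set a | (f a).1 && ~~ [exists i, (f a).2 i]].

Lemma inl_inj : injective (@inl V (V * 'I_k)).
Proof. by move=> a b []. Qed.

Lemma rkS_inl (C : {set V}) : rkS r (inl @: C) = rkS e C.
Proof.
rewrite !rkS_ev; apply/eqP; rewrite eqn_leq; apply/andP; split.
  pose h (v : T) : V := match v with inl a => a | inr (a, _) => a end.
  apply: (@RkF_le _ _ r e h).
    move=> i j; rewrite /ev; have := enum_valP i; have := enum_valP j.
    by case/imsetP=> b _ ->; case/imsetP=> a _ ->.
  move=> i; rewrite /ev; have := enum_valP i; case/imsetP=> a ha hi.
  by exists (enum_rank_in ha a); rewrite /ev enum_rankK_in // hi.
apply: (@RkF_le _ _ e r inl) => [i j //|i].
have ha : (inl (ev C i) : T) \in (inl @: C : {set T}) by rewrite (mem_imset _ _ inl_inj); exact: enum_valP.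
by exists (enum_rank_in ha (inl (ev C i))); rewrite /ev enum_rankK_in.
Qed.

Lemma rank_config (f : Cf) :
  rk (@induced _ r (Bset f)) = (rk (@induced _ e (CV f)) + 2 * #|DV f|)%N.
Proof.
rewrite !rk_induced.
rewrite (@key_rank _ r Qs piT comb_sym comb_pend #|(inl @: DV f : {set T})| (Bset f) (inl @: DV f)) //.
- rewrite (card_imset _ inl_inj).
  congr (_ + _)%N; rewrite -rkS_inl; congr rkS; apply/setP=> y.
  rewrite !inE; case: y => [a|[a i]].
    rewrite (mem_imset _ _ inl_inj) (mem_imset _ _ inl_inj) !inE /= orbF.
    by case: (f a).1; case: [exists i, (f a).2 i].
  rewrite orbT /= ; apply/esym/negP; by case/imsetP.
- apply/subsetP=> y /imsetP [a]; rewrite inE => /andP[ha _] ->; by rewrite inE.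
- rewrite -setI_eq0; apply/eqP/setP=> y; rewrite !inE.
  case: y => [a|[a i]] //=; first by rewrite andbF.
  by rewrite andbT; apply/negP; case/imsetP.
- case=> [a|[a i]]; rewrite !inE //= => hi _ ha.
  by rewrite (mem_imset _ _ inl_inj) inE ha /=; apply/existsP; exists i.
- move=> d /imsetP [a]; rewrite inE => /andP[ha /existsP [i hi]] ->.
  by exists (inr (a, i)); rewrite !inE.
Qed.

End Comb.

Section Sums.
Variables (R : fieldType) (k : nat) (u x : R).
Local Notation St := (bool * {ffun 'I_k -> bool})%type.

Definition Pg (g : {ffun 'I_k -> bool}) : R := \prod_i (if g i then x else 1).
Definition om (s : St) : R :=
  (if s.1 then x else 1) * Pg s.2 * (if s.1 && [exists i, s.2 i] then u ^+ 2 else 1).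
Definition g0 : {ffun 'I_k -> bool} := [ffun => false].
Definition s0 : St := (true, g0).

Lemma Pg0 : Pg g0 = 1.
Proof. by rewrite /Pg big1 // => i _; rewrite ffunE. Qed.

Lemma exists_g (g : {ffun 'I_k -> bool}) : [exists i, g i] = (g != g0).
Proof.
apply/existsP/idP => [[i hi]|hg].
  by apply/negP=> /eqP hg; move: hi; rewrite hg ffunE.
apply/existsP; apply: contraR hg => /existsPn hn; apply/eqP/ffunP => i.
by rewrite ffunE; apply/negbTE.
Qed.

Lemma om_s0 : om s0 = x.
Proof. by rewrite /om /= exists_g eqxx Pg0 !mulr1. Qed.

Lemma sum_Pg : \sum_g Pg g = (1 + x) ^+ k.
Proof.
rewrite /Pg -(bigA_distr_bigA (fun (i : 'I_k) (b : bool) => if b then x else 1)) /=.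
rewrite (eq_bigr (fun _ => 1 + x)); last by move=> i _; rewrite big_bool /= addrC.
by rewrite prodr_const card_ord.
Qed.

Lemma sum_om : \sum_s om s = x + pk k u x.
Proof.
rewrite -(pair_bigA _ (fun b g => om (b, g))) big_bool /=.
rewrite /om /=.
have e1 : \sum_j 1 * Pg j * 1 = (1 + x) ^+ k.
  by rewrite -sum_Pg; apply: eq_bigr => g _; rewrite mul1r mulr1.
have e0 : \sum_(g | g != g0) Pg g = (1 + x) ^+ k - 1.
  by rewrite -sum_Pg [in RHS](bigD1 g0) //= Pg0 addrC addrK.
have e2 : \sum_j x * Pg j * (if [exists i, j i] then u ^+ 2 else 1)
    = x + x * u ^+ 2 * ((1 + x) ^+ k - 1).
  rewrite (bigD1 g0) //= exists_g eqxx Pg0 mulr1 mulr1; congr (_ + _).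
  rewrite -e0 mulr_sumr; apply: eq_bigr => g hg.
  by rewrite exists_g hg mulrAC.
rewrite e1 e2 /pk; set Y := (1 + x) ^+ k.
rewrite -addrA; congr (_ + _).
by rewrite mulrBr mulr1 mulrDr mulr1 [Y * _]mulrC addrAC.
Qed.

End Sums.

Section Main.
Variables (R : fieldType) (V : finType) (e : rel V) (k : nat) (u x : R).
Hypothesis he : symmetric e.
Local Notation T := (V + V * 'I_k)%type.

Lemma inCV (f : Cf V k) a : (a \in CV f) = (f a == s0 k).
Proof.
rewrite inE /s0; case: (f a) => b g /=.
by rewrite xpair_eqE exists_g negbK; case: b.
Qed.

Lemma expr_card (I : finType) (S : {set I}) (c : R) :
  c ^+ #|S| = \prod_(v : I) (if v \in S then c else 1).
Proof. by rewrite -big_mkcond prodr_const. Qed.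

Lemma weight_B (f : Cf V k) :
  x ^+ #|Bset f| * u ^+ (2 * #|DV f|) = \prod_a om u x (f a).
Proof.
rewrite /om !big_split /= exprM !expr_card.
rewrite big_sumType /= -!mulrA; congr (_ * _).
  by apply: eq_bigr => a _; rewrite inE.
congr (_ * _).
  rewrite /Pg pair_bigA; apply: eq_bigr => -[a i] _; by rewrite inE.
by apply: eq_bigr => a _; rewrite inE.
Qed.

Definition wC (C : {set V}) a (s : (bool * {ffun 'I_k -> bool})%type) : R :=
  if a \in C then (if s == s0 k then x else 0)
  else (if s == s0 k then 0 else om u x s).

Lemma prod_wC C (f : Cf V k) :
  \prod_a wC C a (f a) = (C == CV f)%:R * \prod_a om u x (f a).
Proof.
case: eqP => [->|hne].
  rewrite mul1r; apply: eq_bigr => a _; rewrite /wC inCV.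
  by case: eqP => [->|]; rewrite ?om_s0.
rewrite mul0r.
case: (boolP [exists a, (a \in C) != (a \in CV f)]) => [/existsP [a ha]|/existsPn hall].
  rewrite (bigD1 a) //= [wC _ _ _]/wC.
  move: ha; rewrite inCV; case: (a \in C); case: (f a == s0 k) => //= _.
    by rewrite mul0r.
  by rewrite mul0r.
exfalso; apply: hne; apply/setP=> a; by have := hall a; rewrite negbK => /eqP.
Qed.

Lemma sum_wC C a : \sum_s wC C a s = if a \in C then x else pk k u x.
Proof.
rewrite /wC; case: (a \in C).
  by rewrite -big_mkcond big_pred1_eq.
apply: (@addrI _ x); rewrite -sum_om -{1}(@om_s0 R k u x) [in RHS](bigD1 (s0 k)) //=.
congr (_ + _); rewrite (bigD1 (s0 k)) //= eqxx add0r.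
by apply: eq_bigr => s /negbTE ->.
Qed.

Lemma prod_sum_wC C :
  \prod_a \sum_s wC C a s = x ^+ #|C| * pk k u x ^+ (#|V| - #|C|).
Proof.
under eq_bigr do rewrite sum_wC.
rewrite (bigID (fun a => a \in C)) /=.
rewrite (eq_bigr (fun _ => x)); last by move=> a ->.
rewrite [X in _ * X](eq_bigr (fun _ => pk k u x)); last by move=> a /negbTE ->.
rewrite !prodr_const; congr (_ * _); congr (_ ^+ _).
by rewrite -(cardC (mem C)) addKn.
Qed.
End Main.


Definition ginv (V : finType) (k : nat) (B : {set (V + V * 'I_k)%type}) : Cf V k :=
  [ffun a => (inl a \in B, [ffun i => inr (a, i) \in B])].

Lemma Bset_bij (V : finType) (k : nat) : bijective (@Bset V k).
Proof.
exists (@ginv V k).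
  move=> f; apply/ffunP=> a; rewrite ffunE inE /=.
  case E: (f a) => [b g]; congr pair; apply/ffunP=> i; by rewrite ffunE inE /= E.
by move=> B; apply/setP=> -[a|[a i]]; rewrite inE ffunE //= ffunE.
Qed.

Theorem mainTheorem6 (R : fieldType) (V : finType) (e : rel V) (k : nat)
  (he : symmetric e) (hk : (0 < k)%N) (u x : R) (hp : pk k u x != 0) :
  Ppoly (@comb_all V e k) u x = pk k u x ^+ #|V| * Ppoly e u (x / pk k u x).
Proof.
rewrite /Ppoly (reindex (@Bset V k)) /=; last exact: onW_bij (Bset_bij V k).
transitivity (\sum_(f : Cf V k) (\prod_a om u x (f a)) * u ^+ rk (@induced _ e (CV f))).
  apply: eq_bigr => f _; rewrite (rank_config he) exprD.
  by rewrite [u ^+ rk _ * _]mulrC mulrA weight_B.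
transitivity (\sum_(f : Cf V k) \sum_(C : {set V})
    (\prod_a wC u x C a (f a)) * u ^+ rk (@induced _ e C)).
  apply: eq_bigr => f _; rewrite (bigD1 (CV f)) //= prod_wC eqxx mul1r.
  rewrite [X in _ + X]big1 ?addr0 // => C hC; by rewrite prod_wC (negbTE hC) !mul0r.
rewrite exchange_big /= mulr_sumr; apply: eq_bigr => C _.
rewrite -mulr_suml -(bigA_distr_bigA (wC u x C)) prod_sum_wC.
have hc : (#|C| <= #|V|)%N := max_card _.
rewrite expr_div_n.
set a := pk k u x ^+ (#|V| - #|C|); set b := pk k u x ^+ #|C|.
have -> : pk k u x ^+ #|V| = a * b by rewrite /a /b -exprD subnK.
have hb : b != 0 by rewrite expf_neq0.
set X := x ^+ #|C|; set U := u ^+ _.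
rewrite [X / b]mulrC -!mulrA mulVKf // mulrCA.
by [].
Qed.
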